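(* Let $n$ and $0<n_1<\cdots<n_d<n$ be integers with $m_1=n_1$, $m_k=n_k-n_{k-1}$ ($2\le k\le d$), $m_{d+1}=n-n_d$, and regard $\mathrm{Flag}(n_1,\dots,n_d;n)=\{(VJ_1V^{\mathsf T},\dots,VJ_dV^{\mathsf T}):V\in\mathrm{O}(n)\}$ as a submanifold of $(\mathbb{R}^{n\times n})^d$ with the Euclidean (Frobenius) inner product $\langle (X_k),(Y_k)\rangle=\sum_k\operatorname{tr}(X_k^{\mathsf T}Y_k)$. Let $V(t)$ be a differentiable curve in $\mathrm{O}(n)$, $\Lambda(t)=V(t)^{\mathsf T}\dot V(t)\in\mathfrak{so}(n)$, and assume $\Lambda(p,p)(t)\equiv 0$ for $p=1,\dots,d+1$. Let $c(t)=V(t)(J_1,\dots,J_d)V(t)^{\mathsf T}$ and \[ T_2(t)=V(t)\big(\Lambda(t)^2J_1+J_1\Lambda(t)^2,\dots,\Lambda(t)^2J_d+J_d\Lambda(t)^2\big)V(t)^{\mathsf T}. \] Then the orthogonal projection of $T_2(t)$ onto $\mathbb{T}_{c(t)}\mathrm{Flag}(n_1,\dots,n_d;n)$ is zero.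
   Context: $J_k=\operatorname{diag}(-I_{m_1},\dots,-I_{m_{k-1}},I_{m_k},-I_{m_{k+1}},\dots,-I_{m_{d+1}})$. $V(X_1,\dots,X_d)V^{\mathsf T}$ denotes $(VX_1V^{\mathsf T},\dots,VX_dV^{\mathsf T})$. For an $n\times n$ matrix $M$, $M(p,q)$ denotes its $(p,q)$ block in the partition $n=m_1+\cdots+m_{d+1}$. *)

(* Defs.v *)
From HB Require Import structures.
From mathcomp Require Import all_boot all_order all_algebra.
From mathcomp Require Import all_classical all_reals all_analysis.
Set Implicit Arguments. Unset Strict Implicit. Unset Printing Implicit Defensive.
Import Order.TTheory GRing.Theory Num.Theory.
Import numFieldNormedType.Exports.
Local Open Scope ring_scope.
Local Open Scope classical_set_scope.

Section FlagDefs.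
Variable R : realType.
Variables (n d : nat).

(* ns : 'I_d -> nat encodes n_1 < ... < n_d (ns k = n_{k+1}). *)

(* 0-indexed block of row index i in the partition n = m_1 + ... + m_{d+1}:
   block p (1-indexed) consists of the indices n_{p-1} <= i < n_p (n_0 = 0,
   n_{d+1} = n); blk i = #{k | n_k <= i} = p - 1. *)
Definition blk (ns : 'I_d -> nat) (i : 'I_n) : nat := #|[set k : 'I_d | (ns k <= i)%N]|.

(* J_{k+1} = diag(-I, .., -I, I_{m_{k+1}}, -I, .., -I), for k : 'I_d. *)
Definition Jmx (ns : 'I_d -> nat) (k : 'I_d) : 'M[R]_n :=
  \matrix_(i, j) (if i == j then (if blk ns i == k then 1 else -1) else 0).

Definition orthmx (W : 'M[R]_n) : Prop := W^T *m W = 1%:M.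

Definition Flag (ns : 'I_d -> nat) : set ('I_d -> 'M[R]_n) :=
  [set X | exists W, orthmx W /\ forall k, X k = W *m Jmx ns k *m W^T].

Definition frob (X Y : 'I_d -> 'M[R]_n) : R := \sum_k \tr ((X k)^T *m Y k).

Definition mx_derivable m p (V : R -> 'M[R]_(m, p)) (t : R) : Prop :=
  forall i j, derivable (fun s => V s i j) t 1.
Definition mx_deriv m p (V : R -> 'M[R]_(m, p)) (t : R) : 'M[R]_(m, p) :=
  \matrix_(i, j) (fun s => V s i j)^`() t.

Definition tangent_space (M : set ('I_d -> 'M[R]_n)) (x : 'I_d -> 'M[R]_n)
  : set ('I_d -> 'M[R]_n) :=
  [set Y | exists g : R -> ('I_d -> 'M[R]_n),
     (\forall s \near (0:R), M (g s)) /\ g 0 = x /\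
     (forall k, mx_derivable (fun s => g s k) 0) /\
     (forall k, mx_deriv (fun s => g s k) 0 = Y k)].

Definition is_orth_proj (T : set ('I_d -> 'M[R]_n)) (X P : 'I_d -> 'M[R]_n) : Prop :=
  T P /\ forall Y, T Y -> frob (fun k => X k - P k) Y = 0.

End FlagDefs.

(* Main.v *)
Require Import Defs.
From HB Require Import structures.
From mathcomp Require Import all_boot all_order all_algebra.
From mathcomp Require Import all_classical all_reals all_analysis.
Import Order.TTheory GRing.Theory Num.Theory.
Import numFieldNormedType.Exports.
Local Open Scope ring_scope.
Local Open Scope classical_set_scope.

Lemma deriv_sq (R : realType) (n : nat) (f : R -> 'M[R]_n) :
  mx_derivable f 0 -> (\forall s \near 0, f s *m f s = 1%:M) ->
  mx_deriv f 0 *m f 0 + f 0 *m mx_deriv f 0 = 0.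
Proof.
move=> hd hsq; apply/matrixP => i j; rewrite !mxE.
pose h := fun l : 'I_n => (((fun s => f s i l) : R -> R^o) * (fun s => f s l j))%R.
have e1 : \forall s \near 0, (\sum_l h l) s = cst ((1%:M : 'M[R]_n) i j) s.
  apply: filterS hsq => s hs; rewrite fct_sumE /cst -hs mxE.
  by apply: eq_bigr => l _.
have := @near_eq_derive R R^o R^o _ _ 0 1 e1; rewrite derive_cst derive_sum; last first.
  by move=> l; apply: derivableM; apply: hd.
move=> H; rewrite -big_split /=; rewrite -[RHS]H; apply: eq_bigr => l _.
rewrite /h deriveM ?mxE; [|exact: hd|exact: hd].
rewrite !derive1E /= addrC; congr (_ + _); by rewrite mulrC.
Qed.

Lemma Jmx_tr (R : realType) n d ns k : (@Jmx R n d ns k)^T = Jmx R n ns k.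
Proof.
apply/matrixP => i j; rewrite !mxE eq_sym.
by case: eqP => // ->.
Qed.

Lemma Jmx_sq (R : realType) n d ns k : @Jmx R n d ns k *m Jmx R n ns k = 1%:M.
Proof.
apply/matrixP => i j; rewrite !mxE (bigD1 i) //= big1 ?addr0.
  rewrite !mxE eqxx; case: (i =P j) => [_|_]; rewrite ?mulr0 //.
  by case: ifP => _; rewrite ?mulr1 ?mulrNN ?mulr1.
by move=> l /negbTE hl; rewrite !mxE eq_sym hl mul0r.
Qed.

Lemma flag_sq (R : realType) n d ns X k : @Flag R n d ns X -> X k *m X k = 1%:M.
Proof.
case=> W [hW ->].
have hW' : W *m W^T = 1%:M by apply: mulmx1C.
rewrite !mulmxA -[W *m _ *m _ *m W]mulmxA hW mulmx1 -[W *m _ *m _]mulmxA Jmx_sq mulmx1.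
exact: hW'.
Qed.

Lemma alg (R : comRingType) n (W J L Y : 'M[R]_n) : J^T = J ->
  (W^T *m Y *m W) *m J + J *m (W^T *m Y *m W) = 0 ->
  \tr ((W *m (L *m J + J *m L) *m W^T)^T *m Y) = 0.
Proof.
set B := W^T *m Y *m W => hJ hB.
have e1 : (W *m (L *m J + J *m L) *m W^T)^T = W *m (J *m L^T + L^T *m J) *m W^T.
  by rewrite !trmx_mul trmxK linearD /= !trmx_mul hJ mulmxA addrC.
rewrite e1 -!mulmxA (mxtrace_mulC W).
have -> : (J *m L^T + L^T *m J) *m (W^T *m Y) *m W = (J *m L^T + L^T *m J) *m B.
  by rewrite /B !mulmxA.
rewrite mulmxDl mxtraceD -[J *m L^T *m B]mulmxA (mxtrace_mulC J) -[L^T *m J *m B]mulmxA -[L^T *m B *m J]mulmxA -mxtraceD -mulmxDr.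
by rewrite hB mulmx0 linear0.
Qed.

Theorem lemma3p7 (R : realType) (n d : nat) (ns : 'I_d -> nat)
  (hd : (0 < d)%N)
  (hpos : forall k : 'I_d, (0 < ns k)%N)
  (hinc : forall k l : 'I_d, (k < l)%N -> (ns k < ns l)%N)
  (hlt : forall k : 'I_d, (ns k < n)%N)
  (V : R -> 'M[R]_n)
  (hVO : forall t, orthmx (V t))
  (hVd : forall t, mx_derivable V t)
  (hLam : forall t (i j : 'I_n), blk ns i = blk ns j ->
            ((V t)^T *m mx_deriv V t) i j = 0)
  (t : R) :
  let Lam := (V t)^T *m mx_deriv V t in
  let c := fun k : 'I_d => V t *m @Jmx R n d ns k *m (V t)^T in
  let T2 := fun k : 'I_d =>
    V t *m (Lam *m Lam *m @Jmx R n d ns k + @Jmx R n d ns k *m (Lam *m Lam)) *m (V t)^T in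
  is_orth_proj (tangent_space (@Flag R n d ns) c) T2 (fun _ => 0).
Proof.
move=> Lam c T2; split.
  exists (fun _ => c); split; last split; [|by []|split].
  - by near=> s; exists (V t); split.
  - by move=> k i j; exact: derivable_cst.
  - by move=> k; apply/matrixP => i j; rewrite !mxE derive1_cst.
move=> Y [g [hn [hg0 [hgd hY]]]].
rewrite /frob big1 // => k _.
have hsq : \forall s \near 0, g s k *m g s k = 1%:M.
  by apply: filterS hn => s /flag_sq; apply.
have := @deriv_sq R n _ (hgd k) hsq; rewrite hY hg0 /c => hYc.
set W := V t in hYc *; set J := Jmx R n ns k in hYc *; set L := Lam *m Lam.
have hW : W^T *m W = 1%:M by exact: hVO.
set B := W^T *m Y k *m W.
have hB : B *m J + J *m B = 0.
  have := congr1 (fun M => W^T *m M *m W) hYc.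
  rewrite mulmx0 mul0mx mulmxDr mulmxDl => <-.
  rewrite /B !mulmxA -[W^T *m Y k *m W *m J *m W^T *m W]mulmxA hW mulmx1 mul1mx.
  by rewrite ?mulmxA.
rewrite subr0 /T2 -/W -/J -/L; apply: alg => //; exact: Jmx_tr.
Unshelve. all: by end_near.
Qed.
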